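(* Let $n\ge1$ and let $(f_3,\pi_1,\pi_2)$ be a triple where $f_3$ is a pairing of $[n]\cup[\hat n]$, $\pi_1,\pi_2$ are set partitions of $[n]\cup[\hat n]$ with blocks of even size, $\pi_1$ stable by $f_1$ and $f_3$, and $\pi_2$ stable by $f_2$ and $f_3$. Consider the graph whose vertices are the blocks of $\pi_1$ (''white'') and the blocks of $\pi_2$ (''black''), in which: each black block $B$ is joined as a child to the white block containing the maximum hat number of $B$; and each white block $W$ not containing $1$ is joined as a child to the black block containing the maximum non-hat number of $W$. Then this parent/child structure is a tree rooted at the white block containing $1$.
   Context: The ground set is $[n]\cup[\hat n]=\{1,\dots,n,\hat1,\dots,\hat n\}$, with non-hat numbers ordered $1<2<\dots<n$ and hat numbers ordered $\hat1<\hat2<\dots<\hat n$. A pairing is a fixed-point-free involution. $f_1=(1\,\hat n)(2\,\hat1)(3\,\hat2)\cdots(n\,\widehat{n-1})$ and $f_2=(1\,\hat1)(2\,\hat2)\cdots(n\,\hat n)$. A set partition is stable by a permutation $f$ if $f$ maps each block onto itself. *)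

(* Defs.v *)
From Stdlib Require Import Relations.
From mathcomp Require Import all_boot.
Set Implicit Arguments. Unset Strict Implicit. Unset Printing Implicit Defensive.

(* Ground set [n] ∪ [hat n]: inl i is the non-hat number i+1,
   inr j is the hat number hat(j+1)  (0-indexed ordinals). *)
Definition X (n : nat) : finType := ('I_n + 'I_n)%type.

(* f1 = (1 hat n)(2 hat1)(3 hat2)...(n hat(n-1)) *)
Definition f1 {n : nat} (x : X n) : X n :=
  match x with
  | inl i => inr (ord_pred i)
  | inr j => inl (ordS j)
  end.

Definition f2 {n : nat} (x : X n) : X n :=
  match x with
  | inl i => inr i
  | inr j => inl j
  end.

Definition pairing {n : nat} (f : X n -> X n) : Prop :=
  forall x, f (f x) = x /\ f x <> x.

Definition set_partition {n : nat} (P : {set {set X n}}) : Prop :=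
  partition P [set: X n].

Definition even_blocks {n : nat} (P : {set {set X n}}) : Prop :=
  forall B, B \in P -> ~~ odd #|B|.

Definition stable_by {n : nat} (f : X n -> X n) (P : {set {set X n}}) : Prop :=
  forall B, B \in P -> f @: B = B.

(* vertices: inl W = white block W of pi1, inr B = black block B of pi2 *)
Definition vertex (n : nat) : Type := ({set X n} + {set X n})%type.

Definition is_vertex {n : nat} (pi1 pi2 : {set {set X n}}) (v : vertex n) : Prop :=
  match v with
  | inl W => W \in pi1
  | inr B => B \in pi2
  end.

(* is_parent c p : p is the parent of c *)
Definition is_parent {n : nat} (hn : 0 < n) (pi1 pi2 : {set {set X n}})
    (c p : vertex n) : Prop :=
  match c, p with
  | inr B, inl W =>
      B \in pi2 /\ W \in pi1 /\
      exists j : 'I_n, inr j \in B /\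
        (forall j' : 'I_n, inr j' \in B -> (j' <= j)%N) /\ inr j \in W
  | inl W, inr B =>
      W \in pi1 /\ (inl (Ordinal hn) : X n) \notin W /\ B \in pi2 /\
      exists i : 'I_n, inl i \in W /\
        (forall i' : 'I_n, inl i' \in W -> (i' <= i)%N) /\ inl i \in B
  | _, _ => False
  end.

Definition rooted_tree {V : Type} (isv : V -> Prop) (par : V -> V -> Prop) (r : V) : Prop :=
  isv r /\
  (forall p, ~ par r p) /\
  (forall v, isv v -> v <> r ->
     exists p, par v p /\ isv p /\ forall p', par v p' -> p' = p) /\
  (forall v, isv v -> clos_refl_trans_1n V par v r).

(* Main.v *)
Require Import Defs.
From Stdlib Require Import Relations.
From mathcomp Require Import all_boot.
From mathcomp Require Import zify.

Section H.
Variable n : nat.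

Lemma pb_in (P : {set {set X n}}) x : set_partition P -> pblock P x \in P.
Proof. by case/and3P => /eqP Hc _ _; apply: pblock_mem; rewrite Hc in_setT. Qed.

Lemma pb_mem (P : {set {set X n}}) x : set_partition P -> x \in pblock P x.
Proof. by case/and3P => /eqP Hc _ _; rewrite mem_pblock Hc in_setT. Qed.

Lemma pb_eq (P : {set {set X n}}) B x :
  set_partition P -> B \in P -> x \in B -> pblock P x = B.
Proof. by case/and3P => _ Ht _; apply: def_pblock. Qed.

Lemma blk_ne (P : {set {set X n}}) B : set_partition P -> B \in P -> exists x, x \in B.
Proof.
case/and3P => _ _ H0 BP.
have : B != set0 by apply/eqP => E; rewrite -E BP in H0.
by case/set0Pn => x xB; exists x.
Qed.

Lemma stab (f : X n -> X n) (P : {set {set X n}}) B x :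
  stable_by f P -> B \in P -> x \in B -> f x \in B.
Proof. by move=> S BP xB; rewrite -(S B BP); apply: imset_f. Qed.

Lemma maxP (p : pred 'I_n) (i0 : 'I_n) : p i0 ->
  exists i, p i /\ forall j, p j -> (j <= i)%N.
Proof.
move=> pi0; case: (@arg_maxnP _ i0 p (fun i => nat_of_ord i) pi0) => i pi H.
by exists i; split.
Qed.
End H.
Arguments pb_in {n P} x.
Arguments pb_mem {n P} x.
Arguments pb_eq {n P B x}.
Arguments blk_ne {n P B}.
Arguments stab {n f P B x}.

Theorem lemma3 (n : nat) (hn : 0 < n) (f3 : X n -> X n)
    (pi1 pi2 : {set {set X n}}) :
  pairing f3 ->
  set_partition pi1 -> set_partition pi2 ->
  even_blocks pi1 -> even_blocks pi2 ->
  stable_by f1 pi1 -> stable_by f3 pi1 ->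
  stable_by f2 pi2 -> stable_by f3 pi2 ->
  rooted_tree (is_vertex pi1 pi2) (is_parent hn pi1 pi2)
    (inl (pblock pi1 (inl (Ordinal hn) : X n))).
Proof.
move=> _ P1 P2 _ _ S1 _ S2 _.
set o := Ordinal hn; set r := pblock pi1 (inl o).
have rin : r \in pi1 := pb_in _ P1.
have orr : (inl o : X n) \in r := pb_mem _ P1.
have wpar : forall W, W \in pi1 -> W <> r -> exists (i : 'I_n) B,
   (inl i : X n) \in W /\ (forall i', (inl i' : X n) \in W -> (i' <= i)%N) /\
   B \in pi2 /\ (inl i : X n) \in B /\
   is_parent hn pi1 pi2 (inl W) (inr B) /\
   (forall p', is_parent hn pi1 pi2 (inl W) p' -> p' = inr B).
  move=> W WP Wr.
  have oW : (inl o : X n) \notin W.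
    by apply/negP => oW; apply: Wr; rewrite /r (pb_eq P1 WP oW).
  have [x xW] := blk_ne P1 WP.
  have [i0 i0W] : exists i, (inl i : X n) \in W.
    case: x xW => [i|j] xW; first by exists i.
    by exists (ordS j); exact: (stab S1 WP xW).
  have [i [iW imax]] := @maxP n (fun i => (inl i : X n) \in W) i0 i0W.
  have BP := pb_in (inl i) P2; have iB := pb_mem (inl i) P2.
  exists i, (pblock pi2 (inl i)); do 4 split => //.
  split; first by do 3 split => //; exists i.
  case => [W'|B'] //= [_ [_ [B'P [i' [i'W [i'max i'B]]]]]].
  have ii : i' = i by apply/val_inj/eqP; rewrite eqn_leq imax // i'max.
  by subst i'; rewrite (pb_eq P2 B'P i'B).
have bpar : forall B, B \in pi2 -> exists (j : 'I_n) W,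
   (inr j : X n) \in B /\ (forall j', (inr j' : X n) \in B -> (j' <= j)%N) /\
   W \in pi1 /\ (inr j : X n) \in W /\
   is_parent hn pi1 pi2 (inr B) (inl W) /\
   (forall p', is_parent hn pi1 pi2 (inr B) p' -> p' = inl W).
  move=> B BP.
  have [x xB] := blk_ne P2 BP.
  have [j0 j0B] : exists j, (inr j : X n) \in B.
    case: x xB => [i|j] xB; last by exists j.
    by exists i; exact: (stab S2 BP xB).
  have [j [jB jmax]] := @maxP n (fun j => (inr j : X n) \in B) j0 j0B.
  have WP := pb_in (inr j) P1; have jW := pb_mem (inr j) P1.
  exists j, (pblock pi1 (inr j)); do 4 split => //.
  split; first by do 2 split => //; exists j.
  case => [W'|B'] //= [_ [W'P [j' [j'B [j'max j'W]]]]].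
  have jj : j' = j by apply/val_inj/eqP; rewrite eqn_leq jmax // j'max.
  by subst j'; rewrite (pb_eq P1 W'P j'W).
have wreach : forall k W, W \in pi1 ->
    (exists i : 'I_n, (inl i : X n) \in W /\ (n - i <= k)%N) ->
    clos_refl_trans_1n _ (is_parent hn pi1 pi2) (inl W) (inl r).
  elim => [|k IH] W WP [i0 [i0W hk]].
    by exfalso; have := ltn_ord i0; lia.
  case: (eqVneq W r) => [->|Wr]; first exact: Relation_Operators.rt1n_refl.
  have Wr' : W <> r by apply/eqP.
  have [i [B [iW [imax [BP [iB [par1 _]]]]]]] := wpar W WP Wr'.
  have [j [W' [jB [jmax [W'P [jW' [par2 _]]]]]]] := bpar B BP.
  have ij : (i <= j)%N := jmax i (stab S2 BP iB).
  have sW' : (inl (ordS j) : X n) \in W' := stab S1 W'P jW'.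
  eapply Relation_Operators.rt1n_trans; [exact: par1|]; eapply Relation_Operators.rt1n_trans; [exact: par2|].
  case: (ltnP j.+1 n) => hj.
    apply: IH W'P _; exists (ordS j); split => //.
    have -> : (ordS j : nat) = j.+1 by rewrite /= modn_small.
    have := imax i0 i0W; have := ltn_ord j; lia.
  have Ho : ordS j = o.
    apply/val_inj; rewrite /=.
    have -> : j.+1 = n by have := ltn_ord j; lia.
    by rewrite modnn.
  have -> : W' = r by rewrite /r -Ho (pb_eq P1 W'P sW').
  exact: Relation_Operators.rt1n_refl.
have wr : forall W, W \in pi1 ->
    clos_refl_trans_1n _ (is_parent hn pi1 pi2) (inl W) (inl r).
  move=> W Hv; case: (eqVneq W r) => [->|Wr].
    exact: Relation_Operators.rt1n_refl.
  have [i [B [iW _]]] := wpar W Hv (elimN eqP Wr).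
  apply: (wreach n W Hv); exists i; split => //; exact: leq_subr.
split; first exact: rin.
split.
  by case => [W|B] //= [_ [oW _]]; rewrite orr in oW.
split.
  case => [W|B] /= Hv Hne.
    have Wr : W <> r by move=> E; apply: Hne; rewrite E.
    have [i [B [_ [_ [BP [_ [par1 uq]]]]]]] := wpar W Hv Wr.
    exists (inr B); split; [exact: par1 | split; [exact: BP | exact: uq]].
  have [j [W [_ [_ [WP [_ [par1 uq]]]]]]] := bpar B Hv.
  exists (inl W); split; [exact: par1 | split; [exact: WP | exact: uq]].
case => [W|B] /= Hv; first exact: wr.
have [j [W [_ [_ [WP [_ [par1 _]]]]]]] := bpar B Hv.
eapply Relation_Operators.rt1n_trans; [exact: par1|]; exact: wr.
Qed.
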